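(* Let $G$ be a finite graph with at least one vertex and $\lambda>0$. Let $\mathbf{I}$ be an independent set drawn from the hard-core model at fugacity $\lambda$ on $G$. (i) For every $v\in V(G)$, writing $\mathbf{F}_v$ for the subgraph of $G$ induced by the neighbours of $v$ that are externally uncovered by $\mathbf{I}$, \[ \Pr(v\in\mathbf{I})\ge \frac{\lambda}{1+\lambda}(1+\lambda)^{-\mathbb{E}|V(\mathbf{F}_v)|}\,. \] (ii) Moreover, \[ \mathbb{E}|\mathbf{I}| \ge \frac{\lambda}{1+\lambda}|V(G)|(1+\lambda)^{-\frac{2|E(G)|}{|V(G)|}}\,. \]
   Context: For a graph $G$ with set $\mathcal{I}(G)$ of independent sets (including the empty set) and $\lambda>0$, the hard-core model on $G$ at fugacity $\lambda$ is the probability distribution on $\mathcal{I}(G)$ with $\Pr(\mathbf{I}=I)=\lambda^{|I|}/Z_G(\lambda)$, where $Z_G(\lambda)=\sum_{I\in\mathcal{I}(G)}\lambda^{|I|}$. Given $I\in\mathcal{I}(G)$ and $v\in V(G)$, a neighbour $u\in N(v)$ is externally uncovered by $I$ if $u\notin N(I\setminus N(v))$, i.e. $u$ has no neighbour in $I\setminus N(v)$. *)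

(* Defs.v *)
From HB Require Import structures.
From mathcomp Require Import all_boot all_order all_algebra.
From mathcomp Require Import reals exp.
Set Implicit Arguments. Unset Strict Implicit. Unset Printing Implicit Defensive.
Import Order.TTheory GRing.Theory Num.Theory.
Local Open Scope ring_scope.

(* A finite simple graph: vertex type T : finType, adjacency e : rel T,
   assumed symmetric and irreflexive (hypotheses of the theorem). *)
Section HardCore.
Variables (T : finType) (e : rel T).

Definition nbhd (v : T) : {set T} := [set u | e v u].

Definition indep (I : {set T}) : bool :=
  [forall x in I, forall y in I, ~~ e x y].

Definition edges : {set {set T}} :=
  [set E : {set T} | [exists x, exists y, e x y && (E == [set x; y])]].

Variables (R : realType) (lam : R).

Definition Zhc : R := \sum_(I : {set T} | indep I) lam ^+ #|I|.

Definition hc_prob (I : {set T}) : R :=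
  if indep I then lam ^+ #|I| / Zhc else 0.

Definition prob_in (v : T) : R := \sum_(I : {set T} | v \in I) hc_prob I.

(* neighbours of v externally uncovered by I: u \in N(v) with no neighbour
   in I \ N(v); V(F_v) is this set *)
Definition ext_uncovered (v : T) (I : {set T}) : {set T} :=
  [set u in nbhd v | [forall w in I :\: nbhd v, ~~ e u w]].

Definition exp_Fv (v : T) : R :=
  \sum_(I : {set T}) hc_prob I * (#|ext_uncovered v I|)%:R.

Definition exp_size : R := \sum_(I : {set T}) hc_prob I * (#|I|)%:R.

End HardCore.

(* Main.v *)
Require Import Defs.
From HB Require Import structures.
From mathcomp Require Import all_boot all_order all_algebra.
From mathcomp Require Import reals exp sequences.
From mathcomp Require Import ring lra.
Import Order.TTheory GRing.Theory Num.Theory.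
Local Open Scope ring_scope.

Lemma sum_sub (R : realType) (I : finType) (P P' : pred I) (F : I -> R) :
  (forall i, P i -> P' i) -> (forall i, P' i -> 0 <= F i) ->
  \sum_(i | P i) F i <= \sum_(i | P' i) F i.
Proof.
move=> PP F0; rewrite [X in X <= _]big_mkcond [X in _ <= X]big_mkcond /=.
apply: ler_sum => i _; case: (boolP (P i)) => Pi.
  by rewrite (PP _ Pi).
by case: (boolP (P' i)) => // /F0.
Qed.

Lemma pow_sum (R : realType) (T : finType) (A : {set T}) (x : R) : 0 <= x ->
  \sum_(K : {set T} | K \subset A) x ^+ #|K| <= (1 + x) ^+ #|A|.
Proof.
move=> x0.
have := @bigA_distr R 0 1 *%R +%R T (fun i : T => if i \in A then x else 0) (fun _ => 1 : R).
rewrite [in X in X -> _](_ : \prod_i _ = (1 + x) ^+ #|A|); last first.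
  rewrite (bigID (mem A)) /= [X in _ * X]big1 ?mulr1; last first.
    by move=> i /negbTE ->; rewrite add0r.
  rewrite -prodr_const; apply: eq_bigr => i ->; by rewrite addrC.
move=> ->.
rewrite [X in _ <= X](bigID (fun K : {set T} => K \subset A)) /=.
rewrite -[X in X <= _]addr0; apply: lerD; last first.
  apply: sumr_ge0 => K _; apply: prodr_ge0 => i _; case: (i \in K) => //.
  by case: (i \in A).
rewrite le_eqVlt; apply/orP; left; apply/eqP.
apply: eq_bigr => K KA.
rewrite (bigID (mem K)) /= [X in _ * X]big1 ?mulr1; last by move=> i /negbTE ->.
rewrite -prodr_const; apply: eq_bigr => i iK.
by rewrite iK (subsetP KA _ iK).
Qed.

Lemma jensen (R : realType) (I : finType) (p x : I -> R) (c : R) : 0 < c ->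
  (forall i, 0 <= p i) -> \sum_i p i = 1 ->
  c `^ (- \sum_i p i * x i) <= \sum_i p i * c `^ (- x i).
Proof.
move=> c0 p0 p1.
have pE y : c `^ y = expR (y * ln c) by rewrite /powR gt_eqF.
set m := \sum_i p i * x i.
set a := ln c.
set K := expR (- m * a).
under eq_bigr do rewrite pE.
rewrite pE.
apply: (@le_trans _ _ (\sum_i p i * (K * (1 + (m - x i) * a)))).
  rewrite (_ : \sum_i p i * (K * (1 + (m - x i) * a)) = K); first by [].
  rewrite (eq_bigr (fun i => K * p i + (K * a * m) * p i - (K * a) * (p i * x i))); last first.
    by move=> i _; ring.
  by rewrite big_split /= sumrN big_split /= -!mulr_sumr p1 -/m; ring.
apply: ler_sum => i _; apply: ler_wpM2l => //.
rewrite (_ : - x i * a = - m * a + (m - x i) * a); last by ring.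
by rewrite expRD; apply: ler_wpM2l; [exact: expR_ge0 | exact: expR_ge1Dx].
Qed.

Lemma indepP (T : finType) (e : rel T) I x y :
  indep e I -> x \in I -> y \in I -> ~~ e x y.
Proof. by move=> /forall_inP/(_ x) H xI /(forall_inP (H xI)). Qed.

Lemma claimA (T : finType) (e : rel T) (R : realType) (lam : R)
  (e_sym : symmetric e) (e_irr : irreflexive e) (hlam : 0 < lam) (v : T) :
  lam * \sum_(I : {set T} | (v \notin I) && indep e I)
     lam ^+ #|I| * ((1 + lam) ^+ #|ext_uncovered e v I|)^-1
  <= \sum_(I : {set T} | (v \in I) && indep e I) lam ^+ #|I|.
Proof.
set N := nbhd e v.
pose U (J : {set T}) := [set u in N | [forall w in J, ~~ e u w]].
pose Q (J : {set T}) := [&& indep e J, v \notin J & [disjoint J & N]].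
have c0 : 0 < 1 + lam by rewrite addr_gt0.
rewrite (partition_big (fun I => I :\: N) Q); last first.
  move=> I /andP[vI iI]; rewrite /Q; apply/and3P; split.
  - apply/forall_inP => x /setDP[xI _]; apply/forall_inP => y /setDP[yI _].
    exact: indepP iI xI yI.
  - by rewrite inE negb_and vI orbT.
  - by rewrite disjoint_subset; apply/subsetP => x; rewrite !inE => /andP[].
apply: (@le_trans _ _ (lam * \sum_(J | Q J) lam ^+ #|J|)).
  apply: ler_wpM2l; first exact: ltW.
  apply: ler_sum => J QJ.
  set P := fun I : {set T} => ((v \notin I) && indep e I) && (I :\: N == J).
  rewrite (eq_bigr (fun I => lam ^+ #|J| * lam ^+ #|I :&: N| * ((1 + lam) ^+ #|U J|)^-1)); last first.
    move=> I /andP[_ /eqP HJ].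
    rewrite -(cardsID N I) HJ exprD [lam ^+ _ * _]mulrC.
    by rewrite /ext_uncovered HJ.
  rewrite -mulr_suml -mulr_sumr.
  rewrite -[X in _ <= X](mulfK (lt0r_neq0 (exprn_gt0 #|U J| c0))).
  apply: ler_wpM2r; first by rewrite invr_ge0 exprn_ge0 // ltW.
  apply: ler_wpM2l; first by rewrite exprn_ge0 // ltW.
  have injh : {in [set I | P I] &, injective (fun I => I :&: N)}.
    move=> I1 I2; rewrite !inE => /andP[_ /eqP H1] /andP[_ /eqP H2] E.
    by rewrite -(setID I1 N) -(setID I2 N) E H1 H2.
  rewrite (eq_bigl (fun I => I \in [set I | P I])); last by move=> I; rewrite inE.
  rewrite -(big_imset (fun K : {set T} => lam ^+ #|K|) injh) /=.
  apply: le_trans (@pow_sum _ _ (U J) _ (ltW hlam)).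
  apply: sum_sub => [K /imsetP[I]|K _]; last exact: exprn_ge0 (ltW hlam).
  rewrite inE => /andP[/andP[_ iI] /eqP HJ] ->.
  apply/subsetP => u; rewrite !inE => /andP[uI uN]; rewrite uN /=.
  apply/forall_inP => w; rewrite -HJ => /setDP[wI _].
  exact: indepP iI uI wI.
rewrite mulr_sumr.
rewrite (eq_bigr (fun J => lam ^+ #|v |: J|)); last first.
  by move=> J /and3P[_ vJ _]; rewrite cardsU1 vJ add1n exprS.
have injh : {in [set J | Q J] &, injective (fun J => v |: J)}.
  move=> J1 J2; rewrite !inE => /and3P[_ v1 _] /and3P[_ v2 _] E.
  by rewrite -(setU1K v1) -(setU1K v2) E.
rewrite (eq_bigl (fun J => J \in [set J | Q J])); last by move=> J; rewrite inE.
rewrite -(big_imset (fun I : {set T} => lam ^+ #|I|) injh) /=.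
apply: sum_sub => [I /imsetP[J]|I _]; last exact: exprn_ge0 (ltW hlam).
rewrite inE => /and3P[iJ vJ dJ] ->; rewrite setU11 /=.
have nN : forall y, y \in J -> ~~ e v y.
  move=> y yJ; have := disjointFr dJ yJ.
  by rewrite /N /nbhd inE => ->.
apply/forall_inP => x /setU1P[->|xJ]; apply/forall_inP => y /setU1P[->|yJ].
- by rewrite e_irr.
- exact: nN.
- by rewrite e_sym; exact: nN.
- exact: indepP iJ xJ yJ.
Qed.

Lemma handshake (T : finType) (e : rel T)
  (e_sym : symmetric e) (e_irr : irreflexive e) :
  (\sum_v #|nbhd e v| <= 2 * #|edges e|)%N.
Proof.
have E2 : forall E, E \in edges e -> #|E| = 2%N.
  move=> E; rewrite inE => /existsP[x /existsP[y /andP[exy /eqP->]]].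
  rewrite cards2; have xy : x != y.
    by apply/eqP => xy; rewrite xy e_irr in exy.
  by rewrite xy.
have -> : (2 * #|edges e| = \sum_(E in edges e) #|E|)%N.
  rewrite mulnC -sum_nat_const; apply: eq_bigr => E /E2 ->; done.
rewrite [X in (_ <= X)%N](eq_bigr (fun E : {set T} => \sum_(x : T) (if x \in E then 1 else 0)%N)%N); last first.
  by move=> E _; rewrite -sum1_card big_mkcond.
rewrite exchange_big /=; apply: leq_sum => x _.
rewrite -big_mkcondr sum1dep_card.
have injh : {in nbhd e x &, injective (fun y => [set x; y])}.
  move=> y1 y2; rewrite !inE => exy1 exy2 E.
  have : y1 \in [set x; y2] by rewrite -E !inE eqxx orbT.
  rewrite !inE => /orP[/eqP yx|/eqP //].
  by rewrite yx e_irr in exy1.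
rewrite -(card_in_imset injh); apply: subset_leq_card.
apply/subsetP => E /imsetP[y yN ->]; rewrite !inE eqxx andbT.
apply/existsP; exists x; apply/existsP; exists y.
by move: yN; rewrite inE => ->; rewrite eqxx.
Qed.

Theorem lemma3p1 (T : finType) (e : rel T) (R : realType) (lam : R)
  (e_sym : symmetric e) (e_irr : irreflexive e)
  (hT : (0 < #|T|)%N) (hlam : 0 < lam) :
  (forall v : T,
     lam / (1 + lam) * (1 + lam) `^ (- exp_Fv e lam v) <= prob_in e lam v)
  /\
  lam / (1 + lam) * (#|T|)%:R *
    (1 + lam) `^ (- ((2 * #|edges e|)%:R / (#|T|)%:R)) <= exp_size e lam.
Proof.
have c0 : 0 < 1 + lam by rewrite addr_gt0.
set c := 1 + lam in c0 *.
set Z := Zhc e lam.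
have Z0 : 0 < Z.
  rewrite /Z /Zhc (bigD1 set0) /=; last first.
    by apply/forall_inP => x; rewrite inE.
  rewrite cards0 expr0; apply: (lt_le_trans ltr01); rewrite lerDl.
  by apply: sumr_ge0 => I _; exact: exprn_ge0 (ltW hlam).
have p0 : forall I, 0 <= hc_prob e lam I.
  move=> I; rewrite /hc_prob; case: (indep e I) => //.
  by apply: divr_ge0; [exact: exprn_ge0 (ltW hlam) | exact: ltW].
have p1 : \sum_I hc_prob e lam I = 1.
  rewrite /hc_prob -big_mkcond /= -mulr_suml -/(Zhc e lam) -/Z.
  by rewrite mulfV // lt0r_neq0.
have sumE : forall (P : pred {set T}) (f : {set T} -> R),
    \sum_(I | P I) hc_prob e lam I * f I =
    (\sum_(I | P I && indep e I) lam ^+ #|I| * f I) / Z.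
  move=> P f; rewrite big_mkcondr mulr_suml; apply: eq_bigr => I _.
  rewrite /hc_prob; case: (indep e I); first by rewrite mulrAC.
  by rewrite !mul0r.
have gE : forall n : nat, c `^ (- n%:R) = (c ^+ n)^-1.
  by move=> n; rewrite powRN powR_mulrn // ltW.
have partI : forall v : T, lam / c * c `^ (- exp_Fv e lam v) <= prob_in e lam v.
  move=> v.
  have Jn := @jensen _ _ (hc_prob e lam) (fun I => (#|ext_uncovered e v I|)%:R) c c0 p0 p1.
  rewrite /exp_Fv; apply: le_trans (ler_wpM2l _ Jn) _.
    by apply: divr_ge0; [exact: ltW | exact: ltW].
  under eq_bigr do rewrite gE.
  rewrite (bigID (fun I : {set T} => v \in I)) /=.
  rewrite (eq_bigr (fun I => hc_prob e lam I * 1)); last first.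
    move=> I vI; congr (_ * _).
    have -> : ext_uncovered e v I = set0.
      apply/setP => u; rewrite in_set0 in_set; case uN: (u \in nbhd e v) => //=.
      apply/negbTE/negP => /forall_inP/(_ v); rewrite !inE vI andbT.
      rewrite e_irr => /(_ isT).
      by move: uN; rewrite inE e_sym => ->.
    by rewrite cards0 expr0 invr1.
  have prE : prob_in e lam v = \sum_(I : {set T} | v \in I) hc_prob e lam I * 1.
    by rewrite /prob_in; apply: eq_bigr => I _; rewrite mulr1.
  rewrite prE !sumE.
  have hA := claimA _ _ _ _ e_sym e_irr hlam v.
  have a1 : \sum_(I : {set T} | (v \in I) && indep e I) lam ^+ #|I| * 1 = \sum_(I : {set T} | (v \in I) && indep e I) lam ^+ #|I|.
    by apply: eq_bigr => I _; rewrite mulr1.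
  rewrite a1; rewrite -/c in hA.
  move: hA.
  set a := \sum_(I : {set T} | (v \in I) && indep e I) lam ^+ #|I|.
  set b := \sum_(I : {set T} | (v \notin I) && indep e I) lam ^+ #|I| / c ^+ #|ext_uncovered e v I|.
  move=> hA.
  rewrite -subr_ge0.
  have -> : a / Z - lam / c * (a / Z + b / Z) = (a - lam * b) / (c * Z).
    rewrite /c; field.
    by apply/andP; split; apply: lt0r_neq0.
  by apply: divr_ge0; [rewrite subr_ge0 | apply: mulr_ge0; apply: ltW].
split; first exact: partI.
have sizeE : exp_size e lam = \sum_v prob_in e lam v.
  rewrite /exp_size /prob_in.
  rewrite (eq_bigr (fun I : {set T} => \sum_(v : T | v \in I) hc_prob e lam I)); last first.
    by move=> I _; rewrite sumr_const mulr_natr.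
  rewrite [RHS](eq_bigr (fun v : T => \sum_(I : {set T}) (if v \in I then hc_prob e lam I else 0))); last first.
    by move=> v _; rewrite big_mkcond.
  by rewrite exchange_big; apply: eq_bigr => I _; rewrite big_mkcond.
rewrite sizeE.
set n : R := #|T|%:R.
have n0 : 0 < n by rewrite ltr0n.
apply: (@le_trans _ _ (lam / c * \sum_v c `^ (- exp_Fv e lam v))); last first.
  rewrite mulr_sumr; apply: ler_sum => v _; exact: partI.
rewrite -mulrA; apply: ler_wpM2l; first by apply: divr_ge0; apply: ltW.
have psum : \sum_(v : T) n^-1 = 1.
  by rewrite sumr_const -mulr_natr mulVf // lt0r_neq0.
have ni0 : 0 <= n^-1 by rewrite invr_ge0 ltW.
have Jn := @jensen _ _ (fun _ => n^-1) (fun v => exp_Fv e lam v) c c0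
  (fun _ => ni0) psum.
apply: (@le_trans _ _ (n * c `^ (- \sum_v n^-1 * exp_Fv e lam v))).
  apply: ler_wpM2l; first exact: ltW.
  apply: ler_powR; first by rewrite lerDl ltW.
  rewrite lerN2 -mulr_sumr mulrC; apply: ler_wpM2r; first by rewrite invr_ge0 ltW.
  apply: (@le_trans _ _ (\sum_v (#|nbhd e v|)%:R)).
    apply: ler_sum => v _; rewrite /exp_Fv.
    apply: (@le_trans _ _ (\sum_I hc_prob e lam I * (#|nbhd e v|)%:R)).
      apply: ler_sum => I _; apply: ler_wpM2l => //; rewrite ler_nat.
      by apply: subset_leq_card; apply/subsetP => u; rewrite inE => /andP[].
    by rewrite -mulr_suml p1 mul1r.
  by rewrite -natr_sum ler_nat; apply: handshake.
apply: le_trans (ler_wpM2l (ltW n0) Jn) _.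
by rewrite -mulr_sumr mulrA mulfV ?mul1r // lt0r_neq0.
Qed.
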